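(* Let $H$ be a Hopf algebra with bijective antipode and $(H_i)_{0\le i\le n}$ a decreasing Hopf algebra filtration of $H$ with $H_n=\{0\}$ (and $H_i=0$ for $i\ge n$). Let $V$ be a Yetter--Drinfeld module over $H$ with coaction $\delta$, and put $\mathcal F^iV=H_iV$ for all $i\ge0$. Then $\delta(\mathcal F^iV)\subseteq\sum_{k\ge0}H_k\otimes\mathcal F^{i-k}V$ for all $i\ge0$, and $(\mathcal F^iV)_{i\ge0}$ is a decreasing filtration of the braided vector space $V$.
   Context: A decreasing Hopf algebra filtration of $H$ is a family of subspaces $(H_i)_{i\ge0}$ with $H_0=H$, $H_i\supseteq H_j$ for $i\le j$, $H_iH_j\subseteq H_{i+j}$, $\Delta(H_i)\subseteq\sum_{j=0}^iH_j\otimes H_{i-j}$, and $\varepsilon(H_i)=0$, $S(H_i)\subseteq H_i$ for $i\ge1$. The braiding of $V$ is $c(v\otimes w)=v_{(-1)}w\otimes v_{(0)}$. A decreasing filtration of a braided vector space $(V,c)$ is a family $(\mathcal F^iV)_{i\ge0}$ with $V=\mathcal F^0V\supseteq\mathcal F^kV\supseteq\mathcal F^lV$ for $k\le l$, $\bigcap_i\mathcal F^iV=0$, and $c(\mathcal F^iV\otimes\mathcal F^jV)\subseteq\sum_{k+l\ge i+j}\mathcal F^kV\otimes\mathcal F^lV$. Here $\mathcal F^{j}V=V$ for $j<0$. *)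

(* Defs.v *)
(* Hopf algebras / Yetter--Drinfeld modules over a field K,
   with tensors represented by finite lists of pairs (Sweedler-style
   representatives); equality of tensors is tested against all bilinear
   (resp. trilinear) forms, which over a field characterizes equality in the
   tensor product. *)
From HB Require Import structures.
From mathcomp Require Import all_boot all_order all_algebra.
Set Implicit Arguments. Unset Strict Implicit. Unset Printing Implicit Defensive.
Import GRing.Theory.
Local Open Scope ring_scope.

Section Tensors.
Variable K : fieldType.

Definition bilinear_form (A B : lmodType K) (phi : A -> B -> K) :=
  (forall b (c : K) x y, phi (c *: x + y) b = c * phi x b + phi y b) /\
  (forall a (c : K) x y, phi a (c *: x + y) = c * phi a x + phi a y).

Definition trilinear_form (A B C : lmodType K) (phi : A -> B -> C -> K) :=
  (forall b d (c : K) x y, phi (c *: x + y) b d = c * phi x b d + phi y b d) /\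
  (forall a d (c : K) x y, phi a (c *: x + y) d = c * phi a x d + phi a y d) /\
  (forall a b (c : K) x y, phi a b (c *: x + y) = c * phi a b x + phi a b y).

Definition teq (A B : lmodType K) (s t : seq (A * B)) :=
  forall phi : A -> B -> K, bilinear_form phi ->
    \sum_(p <- s) phi p.1 p.2 = \sum_(p <- t) phi p.1 p.2.

Definition teq3 (A B C : lmodType K) (s t : seq (A * B * C)) :=
  forall phi : A -> B -> C -> K, trilinear_form phi ->
    \sum_(p <- s) phi p.1.1 p.1.2 p.2 = \sum_(p <- t) phi p.1.1 p.1.2 p.2.

Definition tscale (A B : lmodType K) (c : K) (s : seq (A * B)) :=
  [seq (c *: p.1, p.2) | p <- s].

Definition tspan (A B : lmodType K) (R : A -> B -> Prop) (s : seq (A * B)) :=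
  exists t : seq (A * B), (forall p, p \in t -> R p.1 p.2) /\ teq s t.

Definition subspace (A : lmodType K) (U : A -> Prop) :=
  U 0 /\ forall (c : K) x y, U x -> U y -> U (c *: x + y).

End Tensors.

Section Hopf.
Variables (K : fieldType) (H : algType K).

Definition is_bialgebra (Delta : H -> seq (H * H)) (eps : H -> K) :=
  (forall (c : K) x y, teq (Delta (c *: x + y)) (tscale c (Delta x) ++ Delta y)) /\
  (forall h, teq3 [seq (q.1, q.2, p.2) | p <- Delta h, q <- Delta p.1]
                  [seq (p.1, q.1, q.2) | p <- Delta h, q <- Delta p.2]) /\
  (forall h, \sum_(p <- Delta h) eps p.1 *: p.2 = h) /\
  (forall h, \sum_(p <- Delta h) eps p.2 *: p.1 = h) /\
  (forall g h, teq (Delta (g * h)) [seq (p.1 * q.1, p.2 * q.2) | p <- Delta g, q <- Delta h]) /\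
  teq (Delta 1) [:: (1, 1)] /\
  (forall (c : K) x y, eps (c *: x + y) = c * eps x + eps y) /\
  (forall g h, eps (g * h) = eps g * eps h) /\
  eps 1 = 1.

Definition is_antipode (Delta : H -> seq (H * H)) (eps : H -> K) (S : H -> H) :=
  (forall (c : K) x y, S (c *: x + y) = c *: S x + S y) /\
  (forall h, \sum_(p <- Delta h) S p.1 * p.2 = eps h *: 1) /\
  (forall h, \sum_(p <- Delta h) p.1 * S p.2 = eps h *: 1).

Definition is_hopf_bij (Delta : H -> seq (H * H)) (eps : H -> K) (S : H -> H) :=
  is_bialgebra Delta eps /\ is_antipode Delta eps S /\ bijective S.

Definition hopf_filtration (Delta : H -> seq (H * H)) (eps : H -> K) (S : H -> H)
    (Hf : nat -> H -> Prop) :=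
  (forall i, subspace (Hf i)) /\
  (forall h, Hf 0%N h) /\
  (forall i j, (i <= j)%N -> forall h, Hf j h -> Hf i h) /\
  (forall i j g h, Hf i g -> Hf j h -> Hf (i + j)%N (g * h)) /\
  (forall i h, Hf i h ->
     tspan (fun a b => exists j, (j <= i)%N /\ Hf j a /\ Hf (i - j)%N b) (Delta h)) /\
  (forall i h, (0 < i)%N -> Hf i h -> eps h = 0) /\
  (forall i h, (0 < i)%N -> Hf i h -> Hf i (S h)).

(* left-left Yetter--Drinfeld module: left H-module (act), left H-comodule
   (delta : v |-> v_(-1) (x) v_(0)), with compatibility
   (h_(1) v)_(-1) h_(2) (x) (h_(1) v)_(0) = h_(1) v_(-1) (x) h_(2) v_(0). *)
Definition is_YD (Delta : H -> seq (H * H)) (eps : H -> K) (V : lmodType K)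
    (act : H -> V -> V) (delta : V -> seq (H * V)) :=
  (forall h (c : K) x y, act h (c *: x + y) = c *: act h x + act h y) /\
  (forall v (c : K) g h, act (c *: g + h) v = c *: act g v + act h v) /\
  (forall v, act 1 v = v) /\
  (forall g h v, act (g * h) v = act g (act h v)) /\
  (forall (c : K) x y, teq (delta (c *: x + y)) (tscale c (delta x) ++ delta y)) /\
  (forall v, teq3 [seq (q.1, q.2, p.2) | p <- delta v, q <- Delta p.1]
                  [seq (p.1, q.1, q.2) | p <- delta v, q <- delta p.2]) /\
  (forall v, \sum_(p <- delta v) eps p.1 *: p.2 = v) /\
  (forall h v, teq [seq (q.1 * p.2, q.2) | p <- Delta h, q <- delta (act p.1 v)]
                   [seq (p.1 * q.1, act p.2 q.2) | p <- Delta h, q <- delta v]).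

Definition FV (V : lmodType K) (act : H -> V -> V) (Hf : nat -> H -> Prop)
    (i : nat) (v : V) :=
  exists s : seq (H * V), (forall p, p \in s -> Hf i p.1) /\
                          v = \sum_(p <- s) act p.1 p.2.

(* F^{i-k} V, with the convention F^j V = V for j < 0 *)
Definition FVshift (V : lmodType K) (act : H -> V -> V) (Hf : nat -> H -> Prop)
    (i k : nat) : V -> Prop :=
  if (k <= i)%N then FV act Hf (i - k)%N else fun _ => True.

Definition braid (V : lmodType K) (act : H -> V -> V) (delta : V -> seq (H * V))
    (s : seq (V * V)) : seq (V * V) :=
  [seq (act q.1 p.2, q.2) | p <- s, q <- delta p.1].

Definition braided_filtration (V : lmodType K) (act : H -> V -> V)
    (delta : V -> seq (H * V)) (F : nat -> V -> Prop) :=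
  (forall i, subspace (F i)) /\
  (forall v, F 0%N v) /\
  (forall k l, (k <= l)%N -> forall v, F l v -> F k v) /\
  (forall v, (forall i, F i v) -> v = 0) /\
  (forall i j (s : seq (V * V)), (forall p, p \in s -> F i p.1 /\ F j p.2) ->
     tspan (fun x y => exists k l, (i + j <= k + l)%N /\ F k x /\ F l y)
           (braid act delta s)).

End Hopf.

(* Main.v *)
Require Import Defs.
From HB Require Import structures.
From mathcomp Require Import all_boot all_order all_algebra.
From mathcomp Require Import zify.
Import GRing.Theory.
Local Open Scope ring_scope.
Set Implicit Arguments. Unset Strict Implicit.

Definition lin1 (K : fieldType) (A : lmodType K) (f : A -> K) :=
  forall (c : K) x y, f (c *: x + y) = c * f x + f y.
Definition linm (K : fieldType) (A B : lmodType K) (g : A -> B) :=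
  forall (c : K) x y, g (c *: x + y) = c *: g x + g y.

Lemma lin1_0 (K : fieldType) (A : lmodType K) (f : A -> K) : lin1 f -> f 0 = 0.
Proof.
move=> Hf; have := Hf 1 0 0; rewrite scaler0 addr0 mul1r => h.
have: f 0 + f 0 = f 0 + 0 by rewrite addr0 -h.
by move/addrI.
Qed.

Lemma lin1_Z (K : fieldType) (A : lmodType K) (f : A -> K) c x :
  lin1 f -> f (c *: x) = c * f x.
Proof. by move=> Hf; have := Hf c x 0; rewrite addr0 (lin1_0 Hf) addr0. Qed.

Lemma lin1_D (K : fieldType) (A : lmodType K) (f : A -> K) x y :
  lin1 f -> f (x + y) = f x + f y.
Proof. by move=> Hf; have := Hf 1 x y; rewrite scale1r mul1r. Qed.

Lemma lin1_sum (K : fieldType) (A : lmodType K) (f : A -> K) (I : Type)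
  (s : seq I) (F : I -> A) :
  lin1 f -> f (\sum_(i <- s) F i) = \sum_(i <- s) f (F i).
Proof.
move=> Hf; elim: s => [|a s IH]; first by rewrite !big_nil (lin1_0 Hf).
by rewrite !big_cons (lin1_D _ _ Hf) IH.
Qed.

Lemma linm_0 (K : fieldType) (A B : lmodType K) (g : A -> B) : linm g -> g 0 = 0.
Proof.
move=> Hf; have := Hf 1 0 0; rewrite scaler0 addr0 scale1r => h.
have: g 0 + g 0 = g 0 + 0 by rewrite addr0 -h.
by move/addrI.
Qed.

Lemma linm_D (K : fieldType) (A B : lmodType K) (g : A -> B) x y :
  linm g -> g (x + y) = g x + g y.
Proof. by move=> Hf; have := Hf 1 x y; rewrite !scale1r. Qed.

Lemma linm_sum (K : fieldType) (A B : lmodType K) (g : A -> B) (I : Type)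
  (s : seq I) (F : I -> A) :
  linm g -> g (\sum_(i <- s) F i) = \sum_(i <- s) g (F i).
Proof.
move=> Hf; elim: s => [|a s IH]; first by rewrite !big_nil (linm_0 Hf).
by rewrite !big_cons (linm_D _ _ Hf) IH.
Qed.

Lemma lin1_comp (K : fieldType) (A B : lmodType K) (f : B -> K) (g : A -> B) :
  lin1 f -> linm g -> lin1 (fun x => f (g x)).
Proof. by move=> Hf Hg c x y /=; rewrite Hg Hf. Qed.

Lemma linm_comp (K : fieldType) (A B C : lmodType K) (f : B -> C) (g : A -> B) :
  linm f -> linm g -> linm (fun x => f (g x)).
Proof. by move=> Hf Hg c x y /=; rewrite Hg Hf. Qed.

Lemma lin1_sumf (K : fieldType) (A : lmodType K) (I : Type) (s : seq I)
  (F : I -> A -> K) :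
  (forall i, lin1 (F i)) -> lin1 (fun x => \sum_(i <- s) F i x).
Proof.
move=> HF c x y; rewrite mulr_sumr -big_split /=.
by apply: eq_bigr => i _; exact: HF.
Qed.

Lemma linm_l (K : fieldType) (H : algType K) (a : H) : linm (fun x : H => a * x).
Proof. by move=> c x y; rewrite mulrDr -scalerAr. Qed.

Lemma linm_r (K : fieldType) (H : algType K) (a : H) : linm (fun x : H => x * a).
Proof. by move=> c x y; rewrite mulrDl -scalerAl. Qed.

Lemma linm_lr (K : fieldType) (H : algType K) (a b : H) :
  linm (fun x : H => a * x * b).
Proof. by move=> c x y; rewrite mulrDr mulrDl -scalerAr -scalerAl. Qed.

Lemma linm_rr (K : fieldType) (H : algType K) (a b : H) :
  linm (fun x : H => x * a * b).
Proof. by move=> c x y; rewrite !mulrDl -!scalerAl. Qed.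

Lemma teq_lin (K : fieldType) (A B C : lmodType K) (dl : A -> seq (B * C)) :
  (forall (c : K) x y, teq (dl (c *: x + y)) (tscale c (dl x) ++ dl y)) ->
  forall phi : B -> C -> K, bilinear_form phi ->
  lin1 (fun x => \sum_(p <- dl x) phi p.1 p.2).
Proof.
move=> Hd phi Hphi c x y /=.
rewrite (Hd c x y phi Hphi) big_cat big_map /= mulr_sumr.
congr (_ + _); apply: eq_bigr => p _.
exact: (lin1_Z (f := fun a => phi a p.2) _ _ (Hphi.1 p.2)).
Qed.

Lemma collect (K : fieldType) (C : Type) (Q : C -> Prop) (A B : eqType)
  (P : B -> Prop) (t : seq A) (F : C -> A -> K) (g : C -> B -> K) :
  (forall p, p \in t -> exists T : seq B, (forall e, e \in T -> P e) /\
       forall c, Q c -> F c p = \sum_(e <- T) g c e) ->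
  exists T : seq B, (forall e, e \in T -> P e) /\
       forall c, Q c -> \sum_(p <- t) F c p = \sum_(e <- T) g c e.
Proof.
elim: t => [|a t IH] Ht.
  by exists [::]; split => // c _; rewrite !big_nil.
have [Ta [HTa Ea]] := Ht a (mem_head a t).
have [Tt [HTt Et]] : exists T : seq B, (forall e, e \in T -> P e) /\
       forall c, Q c -> \sum_(p <- t) F c p = \sum_(e <- T) g c e.
  by apply: IH => p hp; apply: Ht; rewrite in_cons hp orbT.
exists (Ta ++ Tt); split.
  by move=> e; rewrite mem_cat => /orP [] ?; [apply: HTa | apply: HTt].
by move=> c Qc; rewrite big_cons big_cat /= Ea // Et.
Qed.
Lemma key (K : fieldType) (H : algType K) (Delta : H -> seq (H * H)) (eps : H -> K)
  (S : H -> H) (V : lmodType K) (act : H -> V -> V) (delta : V -> seq (H * V)) :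
  is_bialgebra Delta eps -> is_antipode Delta eps S -> is_YD Delta eps act delta ->
  forall h v (phi : H -> V -> K), bilinear_form phi ->
  \sum_(q <- delta (act h v)) phi q.1 q.2 =
  \sum_(p <- Delta h) \sum_(r <- Delta p.1) \sum_(q <- delta v)
     phi (r.1 * q.1 * S p.2) (act r.2 q.2).
Proof.
move=> [DL [Dcoa [Dc1 [Dc2 _]]]] [SL [Sa1 Sa2]] [aR [aL [a1 [aM [dL [dcoa [dc YD]]]]]]].
move=> h v phi [phL phR].
pose f := fun x => \sum_(q <- delta (act x v)) phi q.1 q.2.
have bil2 : forall b c : H, bilinear_form (fun x y => phi (x * b * S c) y).
  move=> b c; split => [y|x]; last exact: phR.
  exact: (lin1_comp (f := fun x => phi x y) (phL y) (linm_rr b (S c))).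
pose G := fun a b c : H => \sum_(q <- delta (act a v)) phi (q.1 * b * S c) q.2.
have linG1 : forall b c, lin1 (fun a => G a b c).
  move=> b c; apply: (lin1_comp (f := fun w => \sum_(q <- delta w) phi (q.1 * b * S c) q.2)
     (g := fun x => act x v)); last exact: aL.
  exact: (teq_lin dL (bil2 b c)).
have linf : lin1 f.
  apply: (lin1_comp (f := fun w => \sum_(q <- delta w) phi q.1 q.2) (g := fun x => act x v));
    last exact: aL.
  exact: (teq_lin dL (conj phL phR)).
transitivity (f (\sum_(p <- Delta h) eps p.2 *: p.1)); first by rewrite Dc2.
rewrite (lin1_sum _ _ linf).
transitivity (\sum_(p <- Delta h) \sum_(r <- Delta p.2) G p.1 r.1 r.2).
  apply: eq_bigr => p _; rewrite (lin1_Z _ _ linf) /f /G mulr_sumr exchange_big /=.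
  apply: eq_bigr => q _.
  have -> : eps p.2 * phi q.1 q.2 = phi (q.1 * (eps p.2 *: 1)) q.2.
    by rewrite -scalerAr mulr1 (lin1_Z (f := fun x => phi x q.2) _ _ (phL q.2)).
  rewrite -Sa2 mulr_sumr (lin1_sum (f := fun x => phi x q.2) _ _ (phL q.2)).
  by apply: eq_bigr => r _; rewrite mulrA.
have trG : trilinear_form G.
  split; first by move=> b d; exact: linG1.
  split.
    move=> a d; apply: lin1_sumf => q.
    exact: (lin1_comp (f := fun x => phi x q.2) (phL q.2) (linm_lr q.1 (S d))).
  move=> a b; apply: lin1_sumf => q.
  exact: (lin1_comp (f := fun x => phi x q.2) (phL q.2)
           (linm_comp (f := fun x => q.1 * b * x) (linm_l (q.1 * b) ) SL)).
have := Dcoa h G trG; rewrite !big_allpairs_dep /= => <-.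
apply: eq_bigr => p _.
have bpsi : bilinear_form (fun x y => phi (x * S p.2) y).
  split => [y|x]; last exact: phR.
  exact: (lin1_comp (f := fun x => phi x y) (phL y) (linm_r (S p.2))).
have := YD p.1 v _ bpsi; rewrite !big_allpairs_dep /= => E.
rewrite /G; rewrite E; apply: eq_bigr => r _; apply: eq_bigr => q _ //.
Qed.

Lemma DA (K : fieldType) (H : algType K) (Delta : H -> seq (H * H)) (eps : H -> K)
  (S : H -> H) (Hf : nat -> H -> Prop)
  (V : lmodType K) (act : H -> V -> V) (delta : V -> seq (H * V)) (i : nat) h v :
  is_hopf_bij Delta eps S -> hopf_filtration Delta eps S Hf -> is_YD Delta eps act delta ->
  Hf i h ->
  exists T : seq (H * H * H),
    (forall e, e \in T -> exists a b c, (a + b + c = i)%N /\ Hf a e.1.1 /\ Hf b e.1.2 /\ Hf c e.2) /\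
    forall phi : H -> V -> K, bilinear_form phi ->
      \sum_(q <- delta (act h v)) phi q.1 q.2 =
      \sum_(e <- T) \sum_(q <- delta v) phi (e.1.1 * q.1 * e.2) (act e.1.2 q.2).
Proof.
move=> [HB [HA Sbij]] HF HY Hh.
have HB' := HB. have HA' := HA. have HY' := HY.
move: HB HA HY => [DL _] [SL _] [aR [aL [_ [_ [dL _]]]]].
move: HF => [Fsub [F0 [Fmon [Fmul [FD [Feps FS]]]]]].
have [t [Rt Et]] := FD i h Hh.
have Kbil : forall phi : H -> V -> K, bilinear_form phi -> forall c : H,
   bilinear_form (fun x y => \sum_(q <- delta v) phi (x * q.1 * S c) (act y q.2)).
  move=> phi [phL phR] c; split => [y|x]; apply: lin1_sumf => q.
    exact: (lin1_comp (f := fun x => phi x (act y q.2)) (phL _) (linm_rr q.1 (S c))).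
  exact: (lin1_comp (f := fun y => phi (x * q.1 * S c) y) (phR _) (aL q.2)).
pose G' := fun (phi : H -> V -> K) (a c : H) => \sum_(r <- Delta a) \sum_(q <- delta v)
    phi (r.1 * q.1 * S c) (act r.2 q.2).
have G'bil : forall phi, bilinear_form phi -> bilinear_form (G' phi).
  move=> phi bphi; split => [c|a].
    exact: (teq_lin DL (Kbil phi bphi c)).
  apply: lin1_sumf => r; apply: lin1_sumf => q.
  exact: (lin1_comp (f := fun x => phi x (act r.2 q.2)) (bphi.1 _)
     (linm_comp (f := fun x => r.1 * q.1 * x) (linm_l (r.1 * q.1)) SL)).
have HC := collect (Q := @bilinear_form K H V) (t := t)
   (F := fun phi p => G' phi p.1 p.2)
   (g := fun phi (e : H * H * H) => \sum_(q <- delta v) phi (e.1.1 * q.1 * e.2) (act e.1.2 q.2))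
   (P := fun e : H * H * H => exists a b c, (a + b + c = i)%N /\ Hf a e.1.1 /\ Hf b e.1.2 /\ Hf c e.2).
destruct HC as [T [PT ET]].
  move=> p pt; have [j [ji [Hj1 Hj2]]] := Rt p pt.
  have [t' [Rt' Et']] := FD j p.1 Hj1.
  exists [seq (r.1, r.2, S p.2) | r <- t']; split.
    move=> e /mapP [r rt' ->] /=; have [j' [j'j [H1 H2]]] := Rt' r rt'.
    exists j', (j - j')%N, (i - j)%N; split; first lia.
    split => //; split => //.
    by case: (posnP (i - j)%N) => [-> | pos]; [exact: F0 | exact: FS].
  move=> phi bphi; rewrite big_map /G' /=.
  exact: (Et' _ (Kbil phi bphi p.2)).
exists T; split => // phi bphi.
rewrite (key HB' HA' HY' h v bphi) -(ET phi bphi) /=.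
exact: (Et (G' phi) (G'bil phi bphi)).
Qed.

Unset Implicit Arguments.

Theorem mainTheorem12 (K : fieldType) (H : algType K)
  (Delta : H -> seq (H * H)) (eps : H -> K) (S : H -> H)
  (Hf : nat -> H -> Prop) (n : nat)
  (V : lmodType K) (act : H -> V -> V) (delta : V -> seq (H * V)) :
  is_hopf_bij Delta eps S ->
  hopf_filtration Delta eps S Hf ->
  (forall i h, (n <= i)%N -> Hf i h -> h = 0) ->
  is_YD Delta eps act delta ->
  (forall i v, FV act Hf i v ->
     tspan (fun h w => exists k, Hf k h /\ FVshift act Hf i k w) (delta v)) /\
  braided_filtration act delta (FV act Hf).
Proof.
move=> Hhopf HF Hn HY.
have Hhopf' := Hhopf. have HF' := HF. have HY' := HY.
move: Hhopf => [HB [HA Sbij]].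
move: HF => [Fsub [F0 [Fmon [Fmul [FD [Feps FS]]]]]].
move: HY => [aR [aL [a1 [aM [dL [dcoa [dc YD]]]]]]].
have dlin := teq_lin dL.
have act0 : forall w, act 0 w = 0.
  by move=> w; exact: (linm_0 (g := fun x => act x w) (aL w)).
have FVa : forall k g w, Hf k g -> FV act Hf k (act g w).
  move=> k g w hg; exists [:: (g, w)]; split; last by rewrite big_seq1.
  by move=> p; rewrite inE => /eqP ->.
have Hf3 : forall a c (x y z : H), Hf a x -> Hf c z -> Hf (a + c)%N (x * y * z).
  move=> a c x y z ha hc.
  by have := Fmul _ _ _ _ (Fmul _ _ _ _ ha (F0 y)) hc; rewrite addn0.
split.
  move=> i v [s [Hs ->]].
  have HC := collect (Q := @bilinear_form K H V) (t := s)
     (F := fun phi (p : H * V) => \sum_(q <- delta (act p.1 p.2)) phi q.1 q.2)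
     (g := fun (phi : H -> V -> K) (x : H * V) => phi x.1 x.2)
     (P := fun x : H * V => exists k, Hf k x.1 /\ FVshift act Hf i k x.2).
  destruct HC as [T [PT ET]].
    move=> p ps.
    have [T [PT ET]] := DA p.2 Hhopf' HF' HY' (Hs p ps).
    exists [seq (e.1.1 * q.1 * e.2, act e.1.2 q.2) | e <- T, q <- delta p.2]; split.
      move=> x /allpairsPdep [e [q [eT qd ->]]] /=.
      have [a [b [c [abc [H1 [H2 H3]]]]]] := PT e eT.
      exists (a + c)%N; split; first exact: Hf3.
      rewrite /FVshift; have -> : (a + c <= i)%N by lia.
      apply: FVa; have -> : (i - (a + c))%N = b by lia.
      done.
    by move=> phi bphi; rewrite ET // big_allpairs_dep /=.
  exists T; split => // phi bphi.
  have E := lin1_sum s (fun p => act p.1 p.2) (dlin phi bphi); simpl in E.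
  rewrite E; exact: ET.
split.
  move=> i; split.
    by exists [::]; split => //; rewrite big_nil.
  move=> c x y [s1 [H1 ->]] [s2 [H2 ->]].
  exists ([seq (c *: p.1, p.2) | p <- s1] ++ s2); split.
    move=> p; rewrite mem_cat => /orP [/mapP [q qs ->] | ps] /=; last exact: H2.
    by have := (Fsub i).2 c q.1 0 (H1 q qs) (Fsub i).1; rewrite addr0.
  rewrite big_cat big_map /= scaler_sumr; congr (_ + _); apply: eq_bigr => p _.
  by have := aL p.2 c p.1 0; rewrite addr0 act0 addr0.
split.
  move=> v; exists [:: (1, v)]; split; last by rewrite big_seq1 a1.
  by move=> p; rewrite inE => /eqP ->.
split.
  move=> k l kl v [s [Hs ->]]; exists s; split => // p ps.
  exact: (Fmon _ _ kl _ (Hs p ps)).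
split.
  move=> v Hv; have [s [Hs ->]] := Hv n.
  by apply: big1_seq => p ps; rewrite (Hn n p.1 (leqnn n) (Hs p ps)) act0.
move=> i j s Hs; rewrite /tspan /braid.
have HC := collect (Q := @bilinear_form K V V) (t := s)
   (F := fun phi (p : V * V) => \sum_(q <- delta p.1) phi (act q.1 p.2) q.2)
   (g := fun (phi : V -> V -> K) (x : V * V) => phi x.1 x.2)
   (P := fun x : V * V => exists k l, (i + j <= k + l)%N /\ FV act Hf k x.1 /\ FV act Hf l x.2).
destruct HC as [T [PT ET]].
  move=> p ps; have [[U [HU EU]] [W [HW EW]]] := Hs p ps.
  have bphi' : forall phi : V -> V -> K, bilinear_form phi ->
      bilinear_form (fun a y => phi (act a p.2) y).
    move=> phi [phL phR]; split => [y|x]; last exact: phR.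
    exact: (lin1_comp (f := fun x => phi x y) (phL y) (aL p.2)).
  have HC := collect (Q := @bilinear_form K V V) (t := U)
   (F := fun phi (u : H * V) => \sum_(q <- delta (act u.1 u.2)) phi (act q.1 p.2) q.2)
   (g := fun (phi : V -> V -> K) (x : V * V) => phi x.1 x.2)
   (P := fun x : V * V => exists k l, (i + j <= k + l)%N /\ FV act Hf k x.1 /\ FV act Hf l x.2).
  destruct HC as [T [PT ET]].
    move=> u uU.
    have [T [PT ET]] := DA u.2 Hhopf' HF' HY' (HU u uU).
    exists [seq y | e <- T, y <- [seq (act (e.1.1 * q.1 * e.2 * w.1) w.2, act e.1.2 q.2)
                                   | q <- delta u.2, w <- W]]; split.
      move=> x /allpairsPdep [e [y [eT /allpairsPdep [q [w [qd wW ->]]] ->]]] /=.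
      have [a [b [c [abc [H1 [H2 H3]]]]]] := PT e eT.
      exists (a + c + j)%N, b; split; first lia.
      split; last exact: FVa.
      apply: FVa; apply: Fmul; [exact: Hf3 | exact: HW].
    move=> phi bphi; rewrite big_allpairs_dep /=.
    rewrite (ET _ (bphi' phi bphi)) /=.
    apply: eq_bigr => e _; rewrite big_allpairs_dep /=; apply: eq_bigr => q _.
    rewrite EW (linm_sum _ _ (aR _)).
    rewrite (lin1_sum (f := fun x => phi x (act e.1.2 q.2)) _ _ (bphi.1 _)).
    by apply: eq_bigr => w _; rewrite -aM.
  exists T; split => // phi bphi.
  rewrite EU.
  have E := lin1_sum U (fun u => act u.1 u.2) (dlin _ (bphi' phi bphi)); simpl in E.
  rewrite E; exact: ET.
exists T; split => // phi bphi.
by rewrite big_allpairs_dep /= ET.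
Qed.
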